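(* Let $G$ be a subcubic planar graph of girth at least $9$ which cannot be decomposed into a linear forest and a matching, chosen with $|V(G)|+|E(G)|$ minimum among all such graphs. Then $G$ contains no two adjacent vertices of degree $2$.
   Context: A graph is subcubic if every vertex has degree at most $3$. The girth is the length of a shortest cycle ($\infty$ if acyclic). A linear forest is a graph each of whose components is a path. A decomposition of $G$ into a linear forest and a matching is a partition of $E(G)$ into the edge set of a linear forest and the edge set of a matching. *)

(* Defs.v *)
From Stdlib Require Import Reals.
From mathcomp Require Import all_boot.

Set Implicit Arguments.
Unset Strict Implicit.
Unset Printing Implicit Defensive.

Record sgraph := SGraph {
  vert :> finType;
  adj : rel vert;
  adj_sym : symmetric adj;
  adj_irr : irreflexive adj }.

Section Defs.
Variable G : sgraph.

Definition edges : {set {set G}} :=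
  [set [set x; y] | x in G, y in G & adj x y].

Definition deg (x : G) : nat := #|[set y | adj x y]|.

Definition gsize : nat := #|G| + #|edges|.

Definition subcubic : Prop := forall x : G, deg x <= 3.

Definition girth_ge (k : nat) : Prop :=
  forall s : seq G, uniq s -> 3 <= size s -> cycle (@adj G) s -> k <= size s.

Definition Frel (F : {set {set G}}) : rel G := fun x y => [set x; y] \in F.

Definition seq_edges (s : seq G) : seq {set G} :=
  [seq [set p.1; p.2] | p <- zip s (behead s)].

(* (V(G), F) is a linear forest: every connected component is a path,
   i.e. its vertex set is listed by a duplicate-free sequence s, consecutive
   vertices of s are F-adjacent, and every F-edge inside the component joins
   consecutive vertices of s. *)
Definition linear_forest (F : {set {set G}}) : Prop :=
  forall x : G, exists s : seq G,
    [/\ uniq s, s != [::],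
        path (Frel F) (head x s) (behead s),
        (forall y, connect (Frel F) x y = (y \in s)) &
        (forall y z, y \in s -> Frel F y z -> [set y; z] \in seq_edges s)].

Definition matching (M : {set {set G}}) : Prop :=
  forall f g, f \in M -> g \in M -> f != g -> [disjoint f & g].

Definition decomposable : Prop :=
  exists F M : {set {set G}},
    [/\ F :&: M = set0, F :|: M = edges, linear_forest F & matching M].

Definition planar : Prop :=
  exists (pos : G -> R * R) (c : G -> G -> R -> R * R),
    injective pos /\
    forall x y, adj x y ->
      [/\ c x y R0 = pos x /\ c x y R1 = pos y,
          continuity (fun t => fst (c x y t)) /\
          continuity (fun t => snd (c x y t)),
          (forall t u, (Rle R0 t /\ Rle t R1) -> (Rle R0 u /\ Rle u R1) ->
             c x y t = c x y u -> t = u),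
          (forall t z, (Rlt R0 t /\ Rlt t R1) -> c x y t <> pos z) &
          (forall u v t t', adj u v -> [set x; y] != [set u; v] ->
             (Rlt R0 t /\ Rlt t R1) -> (Rlt R0 t' /\ Rlt t' R1) -> c x y t <> c u v t')].

End Defs.

(* Main.v *)
Require Import Defs.
From mathcomp Require Import all_boot.
Set Implicit Arguments. Unset Strict Implicit. Unset Printing Implicit Defensive.

Section L.
Variable G : sgraph.
Implicit Types (F : {set {set G}}) (s t : seq G).

Definition comp_seq F (z : G) s :=
  [/\ uniq s, s != [::], path (Frel F) (head z s) (behead s),
      (forall w, connect (Frel F) z w = (w \in s)) &
      (forall u v, u \in s -> Frel F u v -> [set u; v] \in seq_edges s)].

Lemma FrelC F : symmetric (Frel F).
Proof. by move=> u v; rewrite /Frel setUC. Qed.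

Lemma Fsym F : connect_sym (Frel F).
Proof. exact: sym_connect_sym (FrelC F). Qed.

Lemma se_cons2 a b s : seq_edges [:: a, b & s] = [set a; b] :: seq_edges (b :: s).
Proof. by []. Qed.

Lemma se_rcons a s v :
  seq_edges (rcons (a :: s) v) = rcons (seq_edges (a :: s)) [set last a s; v].
Proof.
elim: s a => [|b s IH] a //=.
by rewrite -/(rcons (b :: s) v) se_cons2 IH.
Qed.

Variables (F : {set {set G}}) (x y : G).
Hypothesis lf : linear_forest F.
Hypothesis iso : forall v, ~~ Frel F x v.
Hypothesis uni : forall u v, Frel F y u -> Frel F y v -> u = v.
Hypothesis xy : x != y.

Let e := [set x; y].
Let F' := e |: F.

Lemma F'E u v : Frel F' u v = ([set u; v] == e) || Frel F u v.
Proof. by rewrite /Frel in_setU1. Qed.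

Lemma FF' : subrel (Frel F) (Frel F').
Proof. by move=> u v h; rewrite F'E h orbT. Qed.

Lemma isoC w : connect (Frel F) x w -> w = x.
Proof.
case/connectP=> [[|a p]] /=; first by move=> _ ->.
by rewrite (negbTE (iso a)).
Qed.

Definition P u := (u == x) || connect (Frel F) y u.

Lemma PxE : P x. Proof. by rewrite /P eqxx. Qed.
Lemma PyE : P y. Proof. by rewrite /P connect0 orbT. Qed.
Lemma cxP z : (connect (Frel F) z x || P z) = P z.
Proof.
case hz: (connect _ z x) => //=.
by rewrite Fsym in hz; rewrite (isoC hz) PxE.
Qed.
Lemma cyP z : (connect (Frel F) z y || P z) = P z.
Proof.
case hz: (connect _ z y) => //=.
by rewrite /P Fsym hz orbT.
Qed.

Lemma conn' z w :
  connect (Frel F') z w = connect (Frel F) z w || P z && P w.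
Proof.
apply/idP/idP.
  move=> h.
  have cl : closed (Frel F') [pred w | connect (Frel F) z w || P z && P w].
    move=> u v; rewrite F'E => /orP[/eqP he|hF]; rewrite !inE.
      have hu : u \in e by rewrite -he !inE eqxx.
      have hv : v \in e by rewrite -he !inE eqxx orbT.
      by case/set2P: hu => ->; case/set2P: hv => ->;
        rewrite ?PxE ?PyE !andbT ?cxP ?cyP.
    have ux : (u == x) = false.
      by apply/negbTE; apply/eqP => hx; move: hF; rewrite hx (negbTE (iso v)).
    have vx : (v == x) = false.
      by apply/negbTE; apply/eqP => hx; move: hF; rewrite FrelC hx (negbTE (iso u)).
    have := connect_closed (Fsym F) z hF; have := connect_closed (Fsym F) y hF.
    by rewrite /P ux vx /= !inE => -> ->.
  have := closed_connect cl h; rewrite !inE connect0 => <-; by [].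
have sub : subrel (connect (Frel F)) (connect (Frel F')).
  by apply: connect_sub => u v h; apply: connect1; apply: FF'.
case/orP=> [|/andP[hz hw]]; first exact: sub.
have toX u : P u -> connect (Frel F') u x.
  case/orP=> [/eqP ->|hu]; first exact: connect0.
  apply: (connect_trans (y := y)).
    by rewrite Fsym; exact: sub.
  by apply: connect1; rewrite F'E /e setUC eqxx.
apply: connect_trans (toX _ hz) _; rewrite Fsym; exact: toX.
Qed.

Lemma endpt s : comp_seq F y s ->
  exists a s0, s = a :: s0 /\ (a = y \/ last a s0 = y).
Proof.
case=> us ne pa co ed; case: s us ne pa co ed => [|a s0] // us _ pa co _.
exists a, s0; split => //.
have : y \in a :: s0 by rewrite -co connect0.
rewrite in_cons; case/orP=> [/eqP ->|yin]; first by left.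
right; case/splitPr: yin us pa => p1 [|v p2] us pa.
  by rewrite last_cat.
exfalso; move: pa; rewrite /= cat_path /= => /and3P[_ h1 /andP[h2 _]].
rewrite FrelC in h1; have hv := uni h1 h2.
move: us; rewrite -cat_cons cat_uniq => /and3P[_ /hasPn hn _].
have := hn v; rewrite [v \in y :: _]in_cons [v \in v :: _]in_cons eqxx orbT => /(_ isT).
by rewrite -hv mem_last.
Qed.

Lemma mk z t s : comp_seq F y s -> P z -> uniq t -> t != [::] ->
  path (Frel F') (head z t) (behead t) ->
  (forall w, (w \in t) = (w == x) || (w \in s)) ->
  {subset seq_edges s <= seq_edges t} -> e \in seq_edges t ->
  comp_seq F' z t.
Proof.
case=> _ _ _ co ed Pz ut nt pt mt st et; split => //.
  move=> w; rewrite conn' Pz mt -co /=.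
  case hw: (connect _ z w) => //=.
  case/orP: Pz => [/eqP hz|hz].
    by move: hw; rewrite hz => /isoC ->; rewrite eqxx.
  by rewrite (connect_trans hz hw) orbT.
move=> u v ut'; rewrite F'E => /orP[/eqP ->//|hF].
apply: st; apply: ed => //.
move: ut'; rewrite mt => /orP[/eqP hu|//].
by move: hF; rewrite hu (negbTE (iso v)).
Qed.

Lemma addL : linear_forest F'.
Proof.
move=> z; case Pz: (P z).
  have [s cs] := lf y.
  have xs : x \notin s.
    case: cs => _ _ _ co _; rewrite -co; apply/negP.
    move=> h; rewrite Fsym in h; have hx := isoC h; move: xy; by rewrite hx eqxx.
  have us : uniq s by case: cs.
  have ps : path (Frel F') (head y s) (behead s).
    by case: cs => _ _ pa _ _; apply: sub_path FF' _ _ pa.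
  have [a [s0 [hs [hy|hy]]]] := endpt cs; subst s.
    exists (x :: a :: s0); apply: (mk cs Pz).
    - by rewrite cons_uniq xs.
    - by [].
    - subst a; rewrite /= F'E eqxx /=; exact: ps.
    - by move=> w; rewrite in_cons.
    - by move=> f hf; rewrite se_cons2 in_cons hf orbT.
    - by rewrite se_cons2 hy in_cons eqxx.
  exists (rcons (a :: s0) x); apply: (mk cs Pz).
  - by rewrite rcons_uniq xs.
  - by case: s0 {hy ps us xs cs}.
  - by rewrite rcons_cons /= rcons_path ps /= F'E hy /e setUC eqxx.
  - by move=> w; rewrite mem_rcons in_cons.
  - by move=> f hf; rewrite se_rcons mem_rcons in_cons hf orbT.
  - by rewrite se_rcons hy mem_rcons in_cons /e setUC eqxx.
have [s [us ns pa co ed]] := lf z; exists s; split => //.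
- exact: sub_path FF' _ _ pa.
- by move=> w; rewrite conn' Pz /= orbF co.
move=> u v ut; rewrite F'E => /orP[/eqP he|hF]; last exact: ed.
have : u \in e by rewrite -he !inE eqxx.
move: ut; rewrite -co => hc /set2P[hu|hu]; move: hc; rewrite hu => hc.
  by have := cxP z; rewrite hc Pz.
by have := cyP z; rewrite hc Pz.
Qed.
End L.

Section Main.
Variable G : sgraph.

Lemma edgesP (f : {set G}) :
  reflect (exists u v, adj u v /\ f = [set u; v]) (f \in edges G).
Proof.
rewrite /edges; apply: (iffP imset2P).
  by case=> u v _; rewrite inE => huv ->; exists u, v.
case=> u [v [huv ->]]; apply: (Imset2spec (x1 := u) (x2 := v)) => //; by rewrite inE.
Qed.

Lemma edge_neq (p u : G) : [set p; u] \in edges G -> u != p.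
Proof.
case/edgesP=> u' [v' [h he]]; apply/eqP => hu; move: he; rewrite hu setUid => he.
have : u' \in [set p] by rewrite he !inE eqxx.
have : v' \in [set p] by rewrite he !inE eqxx orbT.
by rewrite !inE => /eqP hv /eqP hu'; move: h; rewrite hv hu' adj_irr.
Qed.

Lemma pair_eq (p u r : G) : [set p; u] = [set p; r] -> u != p -> u = r.
Proof.
move=> h hn; have : u \in [set p; r] by rewrite -h !inE eqxx orbT.
by case/set2P => // hu; rewrite hu eqxx in hn.
Qed.

Lemma nbr (p q : G) : deg p = 2 -> adj p q -> exists r, forall v, adj p v -> v = q \/ v = r.
Proof.
rewrite /deg (cardsD1 q) inE => h hq; rewrite hq in h.
have /cards1P [r hr] : #|[set v | adj p v] :\ q| == 1 by apply/eqP; apply: (@addnI 1); exact: h.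
exists r => v hv; case: (eqVneq v q) => [->|hvq]; first by left.
right; have : v \in [set v | adj p v] :\ q by rewrite !inE hvq hv.
by rewrite hr inE => /eqP.
Qed.

Lemma edge_at (p q r : G) f : (forall v, adj p v -> v = q \/ v = r) ->
  f \in edges G -> f != [set p; q] -> p \in f -> f = [set p; r].
Proof.
move=> hn /edgesP [u [v [huv hf]]] hne; rewrite hf => /set2P [hu|hv].
  subst u; case: (hn _ huv) => hv; subst v => //.
  by rewrite hf eqxx in hne.
subst v; rewrite adj_sym in huv; case: (hn _ huv) => hu; subst u.
  by rewrite hf setUC eqxx in hne.
by rewrite setUC.
Qed.

Lemma case2 (p q a b : G) (F M : {set {set G}}) :
  adj p q ->
  (forall v, adj p v -> v = q \/ v = a) ->
  (forall v, adj q v -> v = p \/ v = b) ->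
  F :&: M = set0 -> F :|: M = edges G :\ [set p; q] ->
  linear_forest F -> matching M -> [set p; a] \in M ->
  decomposable G.
Proof.
move=> hpq np nq FM0 FMU lf mt hpa.
have inFM f : f \in F -> f \in M -> False.
  move=> h1 h2; suff : f \in (set0 : {set {set G}}) by rewrite inE. by rewrite -FM0 inE h1 h2.
have inE' f : f \in F -> f \in edges G :\ [set p; q].
  by move=> h; rewrite -FMU inE h.
have inEM f : f \in M -> f \in edges G :\ [set p; q].
  by move=> h; rewrite -FMU inE h orbT.
have eG : [set p; q] \in edges G by apply/edgesP; exists p, q.
exists ([set p; q] |: F), M; split => //.
- apply/setP => f; rewrite !inE; apply/negP => /andP[/orP[/eqP ->|hF] hM].
    by have := inEM _ hM; rewrite !inE eqxx.
  exact: inFM hF hM.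
- by rewrite -setUA FMU setD1K.
apply: addL => //.
- move=> v; apply/negP => hF; have := inE' _ hF; case/setD1P => hne he.
  have := edge_at np he hne; rewrite !inE eqxx => /(_ isT) hh.
  by apply: (inFM _ hF); rewrite hh.
- have key u : Frel F q u -> u = b.
    move=> hF; have := inE' _ hF; case/setD1P => hne he.
    have hne' : [set q; u] != [set q; p] by rewrite (setUC [set q] [set p]).
    have := edge_at nq he hne'; rewrite !inE eqxx => /(_ isT) hh.
    exact: pair_eq hh (edge_neq he).
  by move=> u v /key -> /key ->.
- by apply/eqP => h; move: hpq; rewrite h adj_irr.
Qed.

End Main.

Section Del.
Variables (G : sgraph) (x y : G).
Definition dadj : rel G := fun u v => adj u v && ([set u; v] != [set x; y]).
Lemma dadj_sym : symmetric dadj.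
Proof. by move=> u v; rewrite /dadj adj_sym setUC. Qed.
Lemma dadj_irr : irreflexive dadj.
Proof. by move=> u; rewrite /dadj adj_irr. Qed.
Definition delG : sgraph := SGraph dadj_sym dadj_irr.

Lemma edges_del : edges delG = edges G :\ [set x; y].
Proof.
apply/setP => f; apply/idP/idP.
  case/edgesP => u [v [/andP [huv hne] ->]]; apply/setD1P; split => //.
  by apply/(@edgesP G); exists u, v.
case/setD1P => hne /(@edgesP G) [u [v [huv hf]]]; apply/(@edgesP (delG)); exists u, v.
by split => //; rewrite /= /dadj huv -hf hne.
Qed.

Lemma del_planar : planar G -> planar delG.
Proof.
case=> pos [c [ip h]]; exists pos, c; split => // u v /andP [huv _].
have [h1 h2 h3 h4 h5] := h u v huv; split => //.
by move=> u' v' t t' /andP [h' _]; apply: h5.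
Qed.

Lemma del_subcubic : subcubic G -> subcubic delG.
Proof.
move=> hs u; apply: leq_trans (hs u); apply: subset_leq_card.
by apply/subsetP => v; rewrite !inE => /andP [].
Qed.

Lemma del_girth k : girth_ge G k -> girth_ge delG k.
Proof.
move=> hg s us hs hc; apply: hg us hs _; apply: sub_cycle hc.
by move=> u v /andP [].
Qed.

Lemma del_size : adj x y -> gsize delG < gsize G.
Proof.
move=> hxy; rewrite /gsize edges_del ltn_add2l; apply: proper_card.
by apply: properD1; apply/(@edgesP G); exists x, y.
Qed.
End Del.

Theorem lemma19 (G : sgraph) :
  planar G -> subcubic G -> girth_ge G 9 -> ~ decomposable G ->
  (forall H : sgraph, planar H -> subcubic H -> girth_ge H 9 ->
     ~ decomposable H -> gsize G <= gsize H) ->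
  forall x y : G, adj x y -> ~ (deg x = 2 /\ deg y = 2).
Proof.
move=> pl sc gi nd mn x y hxy [dx dy].
have nH : ~ decomposable (delG x y).
  move=> hd.
  apply: nd; case: hd => F [M [FM0 FMU lf mt]].
  rewrite edges_del in FMU.
  have hyx : adj y x by rewrite adj_sym.
  have [a na] := nbr dx hxy.
  have [b nb] := nbr dy hyx.
  case hxa: ([set x; a] \in M).
    exact: (case2 hxy na nb FM0 FMU lf mt hxa).
  case hyb: ([set y; b] \in M).
    rewrite (setUC [set x]) in FMU.
    exact: (case2 hyx nb na FM0 FMU lf mt hyb).
  have inFM f : f \in F -> f \in M -> False.
    move=> h1 h2; suff : f \in (set0 : {set {set G}}) by rewrite inE.
    by rewrite -FM0 inE h1 h2.
  have inE' f : f \in F -> f \in edges G :\ [set x; y].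
    by move=> h; rewrite -FMU inE h.
  have inEM f : f \in M -> f \in edges G :\ [set x; y].
    by move=> h; rewrite -FMU inE h orbT.
  have eG : [set x; y] \in edges G by apply/(@edgesP G); exists x, y.
  have disj g : g \in M -> [disjoint [set x; y] & g].
    move=> hg; have /setD1P [hne he] := inEM _ hg.
    have xg : x \notin g.
      apply/negP => xg; have hh := edge_at na he hne xg.
      by rewrite -hh hg in hxa.
    have yg : y \notin g.
      have hne' : g != [set y; x] by rewrite (setUC [set y]).
      apply/negP => yg; have hh := edge_at nb he hne' yg.
      by rewrite -hh hg in hyb.
    rewrite -setI_eq0; apply/eqP/setP => w; rewrite !inE.
    apply/negP => /andP [/orP [/eqP hw|/eqP hw] hwg].
      by rewrite -hw hwg in xg.
    by rewrite -hw hwg in yg.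
  exists F, ([set x; y] |: M); split => //.
  - apply/setP => f; rewrite !inE; apply/negP => /andP [hF /orP [/eqP hf|hM]].
      by have := inE' _ hF; rewrite hf !inE eqxx.
    exact: inFM hF hM.
  - by rewrite setUCA FMU setD1K.
  move=> f g; rewrite !in_setU1 => /orP [/eqP ->|hf] /orP [/eqP ->|hg] hfg.
  - by rewrite eqxx in hfg.
  - exact: disj.
  - by rewrite disjoint_sym; apply: disj.
  - exact: mt.
have := mn _ (@del_planar G x y pl) (@del_subcubic G x y sc) (@del_girth G x y 9 gi) nH.
by rewrite leqNgt (@del_size G x y hxy).
Qed.
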